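(* Let $f:\mathbb{R}\to\mathbb{C}$ be Lebesgue measurable. Suppose that for every trigonometric polynomial $u$ that is not identically zero, every finite subset $B=\{b_1,\ldots,b_n\}\subset\mathbb{R}_+$, and every $M>0$, the set \[ E_{u,M,B}=\Big\{x\in\mathbb{R}_+: |u(x)f(x)|>M\sum_{i=1}^n|f(x+b_i)|\Big\} \] has positive Lebesgue measure. Then $\mathcal G(f,\mathbb{R}^2)$ is linearly independent. Moreover, if for some $b>0$ this hypothesis is only assumed for finite subsets $B\subset b\mathbb{N}$ (and all nonzero trigonometric polynomials $u$ and all $M>0$), then $\mathcal G(f,\mathbb{R}\times b\mathbb{Z})$ is linearly independent.
   Context: $\mathbb{R}_+=(0,\infty)$. A trigonometric polynomial is a function $u(x)=\sum_{j=1}^m c_je^{2\pi i a_j x}$ with $a_j\in\mathbb{R}$, $c_j\in\mathbb{C}$ (not necessarily periodic). For $a,b\in\mathbb{R}$, $M_aT_bf(x)=e^{2\pi i a x}f(x-b)$, and for $\Lambda\subset\mathbb{R}^2$, $\mathcal G(f,\Lambda)=\{M_aT_bf:(a,b)\in\Lambda\}$. Measurable functions equal a.e. are identified; $\mathcal G(f,\Lambda)$ is linearly independent if for every finite $F\subset\Lambda$ and coefficients $c_{(a,b)}$, $(a,b)\in F$, not all zero, $\sum_{(a,b)\in F}c_{(a,b)}M_aT_bf$ is not zero almost everywhere. *)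

(* Defs.v *)
From HB Require Import structures.
From mathcomp Require Import all_boot all_order all_algebra.
From mathcomp Require Import all_classical all_reals all_analysis.
From mathcomp Require Import complex.
Set Implicit Arguments. Unset Strict Implicit. Unset Printing Implicit Defensive.
Import Order.TTheory GRing.Theory Num.Theory.
Local Open Scope ring_scope.
Local Open Scope classical_set_scope.

(* The measurable type of Lebesgue-measurable subsets of R (Caratheodory      *)
(* completion of the Borel sets); its carrier is R itself.                    *)
Definition lebT (R : realType) :=
  caratheodory_type (wlength (R:=R) idfun)^*%mu.

Notation leb := (@completed_lebesgue_measure _).

Definition leb_measurable (R : realType) (f : R -> R[i]) : Prop :=
  measurable_fun [set: lebT R] (fun x : lebT R => complex.Re (f x)) /\
  measurable_fun [set: lebT R] (fun x : lebT R => complex.Im (f x)).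

Definition cmod (R : realType) (z : R[i]) : R := Normc.normc z.

Definition e2pi (R : realType) (t : R) : R[i] :=
  complex.Complex (cos (2 * pi * t)) (sin (2 * pi * t)).

Definition trigpoly (R : realType) (s : seq (R * R[i])) (x : R) : R[i] :=
  \sum_(p <- s) p.2 * e2pi (p.1 * x).

Definition MT (R : realType) (a b : R) (f : R -> R[i]) (x : R) : R[i] :=
  e2pi (a * x) * f (x - b).

Definition gabor_lin_indep (R : realType) (f : R -> R[i]) (Lam : set (R * R)) : Prop :=
  forall (F : seq (R * R)) (c : R * R -> R[i]),
    uniq F -> (forall p, p \in F -> Lam p) ->
    (exists2 p, p \in F & c p != 0) ->
    ~ {ae leb, forall x : lebT R, \sum_(p <- F) c p * MT p.1 p.2 f x = 0}.

Definition Eset (R : realType) (f : R -> R[i]) (u : seq (R * R[i])) (M : R)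
    (B : seq R) : set (lebT R) :=
  [set x : R | 0 < x /\ M * \sum_(bi <- B) cmod (f (x + bi)) < cmod (trigpoly u x * f x)].

Definition hypE (R : realType) (f : R -> R[i]) (Bset : set R) : Prop :=
  forall (u : seq (R * R[i])), (exists x, trigpoly u x != 0) ->
  forall (B : seq R), uniq B -> (forall y, y \in B -> Bset y) ->
  forall M : R, 0 < M -> (0 < leb (Eset f u M B))%E.

(* Main.v *)
Require Import Defs.
From HB Require Import structures.
From mathcomp Require Import all_boot all_order all_algebra.
From mathcomp Require Import all_classical all_reals all_analysis.
From mathcomp Require Import complex.
From mathcomp Require Import ring lra.
Import Order.TTheory GRing.Theory Num.Theory.
Local Open Scope ring_scope.
Local Open Scope classical_set_scope.

Section S.
Variable R : realType.
Lemma wl_shift (a b t : R) :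
  wlength idfun [set y : ocitv_type R | `]a, b]%classic (y + t)] = wlength idfun (`]a, b]%classic : set (ocitv_type R)).
Proof.
have -> : [set y : ocitv_type R | `]a, b]%classic (y + t)] = `](a - t), (b - t)]%classic.
  apply/seteqP; split => y /=; rewrite !in_itv /= => /andP[h1 h2]; apply/andP; split; lra.

rewrite !wlength_itv /= !lte_fin ltrD2r /=.
case: ifP => // _; congr (_%:E); rewrite /=; lra.
Qed.


Lemma leb_shift (N : set R) (t : R) :
  (leb ([set y : R | N (y + t)%R] : set (lebT R)) <= leb (N : set (lebT R)))%E.
Proof.
change (mu_ext (wlength idfun) [set y : ocitv_type R | N ((y : R) + t)%R] <= mu_ext (wlength idfun) N)%E.
apply: le_ereal_inf => x [A [mA NA] <-].
exists (fun k => [set y : ocitv_type R | A k ((y : R) + t)%R]).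
  split.
    move=> k; have [[a b] _ Ak] := mA k.
    exists (a - t, b - t) => //=; rewrite -Ak; apply/seteqP; split => y /=;
      rewrite !in_itv /= => /andP[h1 h2]; apply/andP; split; lra.
  by move=> y /= /NA [k _ Ak]; exists k.
have E k : wlength idfun [set y : ocitv_type R | A k ((y : R) + t)%R] = wlength idfun (A k).
  by have [[a b] _ Ak] := mA k; rewrite -Ak wl_shift.
by under eq_fun do under eq_bigr do rewrite E.
Qed.

Lemma e2piD (x y : R) : e2pi (x + y) = e2pi x * e2pi y.
Proof.
rewrite /e2pi mulrDr cosD sinD /=; congr (complex.Complex _ _); ring.
Qed.

Lemma e2pi0 : e2pi (0 : R) = 1.
Proof. by rewrite /e2pi mulr0 cos0 sin0. Qed.

Lemma e2pi_neq0 (x : R) : e2pi x != 0.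
Proof.
apply/negP => /eqP h.
have := e2piD x (- x); rewrite subrr e2pi0 h mul0r => /eqP; by rewrite oner_eq0.
Qed.

Lemma cmod_ge0 (z : R[i]) : 0 <= cmod z.
Proof. by case: z => a b; rewrite /cmod /=; exact: sqrtr_ge0. Qed.

Lemma cmod_e2pi (x : R) : cmod (e2pi x) = 1.
Proof. by rewrite /cmod /e2pi /= cos2Dsin2 sqrtr1. Qed.

Lemma cmodM (x y : R[i]) : cmod (x * y) = cmod x * cmod y.
Proof. exact: Normc.normcM. Qed.

Lemma cmodD (x y : R[i]) : cmod (x + y) <= cmod x + cmod y.
Proof. exact: le_normcD. Qed.

Lemma cmodN (x : R[i]) : cmod (- x) = cmod x.
Proof. exact: normcN. Qed.

Lemma cmod0 : cmod (0 : R[i]) = 0.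
Proof. exact: Normc.normc0. Qed.

Lemma cmod_sum (I : Type) (s : seq I) (P : pred I) (g : I -> R[i]) :
  cmod (\sum_(i <- s | P i) g i) <= \sum_(i <- s | P i) cmod (g i).
Proof.
apply: (big_rec2 (fun a b => cmod a <= b)); first by rewrite cmod0.
move=> i y1 y2 _ h; apply: le_trans (cmodD _ _) _; exact: lerD.
Qed.

Lemma le_sum_mem (T : eqType) (s : seq T) (g : T -> R) x :
  x \in s -> (forall y, 0 <= g y) -> g x <= \sum_(y <- s) g y.
Proof.
by move=> xs g0; rewrite (big_rem x) //= lerDl sumr_ge0.
Qed.

Lemma sin_neq0 (x : R) : 0 < `|x| < pi -> sin x != 0.
Proof.
move=> /andP[h1 h2]; have [xn|xp] := ltP x 0.
  have : 0 < sin (- x) by apply: sin_gt0_pi; rewrite -ltr0_norm // h2 andbT; lra.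
  by rewrite sinN oppr_gt0 => /lt_eqF ->.
have : 0 < sin x.
  apply: sin_gt0_pi; rewrite -(ger0_norm xp) h2 andbT //.
by move/gt_eqF => ->.
Qed.

Lemma exists_t (a : R) (s : seq R) : a \notin s ->
  exists t : R, forall a', a' \in s -> e2pi (a' * t) != e2pi (a * t).
Proof.
move=> as_.
set K := 1 + \sum_(a' <- s) `|a' - a|.
have K1 : 1 <= K by rewrite lerDl sumr_ge0.
exists (4 * K)^-1 => a' a's; apply/negP => /eqP heq.
have d0 : a' - a != 0 by rewrite subr_eq0; apply: contraNneq as_ => <-.
have dK : `|a' - a| <= K - 1.
  rewrite /K (addrC 1) addrK; apply: (@le_sum_mem _ s (fun y => `|y - a|)) => // y.
have h1 : e2pi ((a' - a) * (4 * K)^-1) = 1.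
  rewrite mulrBl [_ - _]addrC e2piD heq -e2piD.
  by rewrite [X in e2pi X](_ : _ = 0) ?e2pi0 //; ring.
have : sin (2 * pi * ((a' - a) * (4 * K)^-1)) = 0.
  by have := congr1 (@complex.Im R) h1.
apply/eqP; apply: sin_neq0.
have Kp : 0 < K by lra.
have tK : (4 * K)^-1 * (4 * K) = 1 by rewrite mulVf //; lra.
have tp : 0 < (4 * K)^-1 by rewrite invr_gt0; lra.
have pp := pi_gt0 R.
have dp : 0 < `|a' - a| by rewrite normr_gt0.
rewrite !normrM (ger0_norm (ltW tp)) (ger0_norm (ltW pp)) normr_nat.
have hdt : `|a' - a| * (4 * K)^-1 < 2^-1 by nra.
apply/andP; split; first by rewrite !mulr_gt0.
nra.
Qed.

Lemma trig_zero_n (n : nat) (s : seq (R * R[i])) : size s = n -> uniq (map fst s) ->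
  (forall x, trigpoly s x = 0) -> forall p, p \in s -> p.2 = 0.
Proof.
elim: n s => [|n IH] [|[a c] s] //= [sz] /andP[anot us] H.
have Hs : forall q, q \in s -> q.2 = 0.
  have [t ht0] := @exists_t a _ anot.
  have ht q : q \in s -> e2pi (q.1 * t) != e2pi (a * t) by move=> qs; apply: ht0; exact: map_f.
  pose s' := [seq (q.1, q.2 * (e2pi (q.1 * t) - e2pi (a * t))) | q <- s].
  have us' : uniq (map fst s') by rewrite /s' -map_comp.
  have Hs1 y : trigpoly s y = - (c * e2pi (a * y)).
    by have := H y; rewrite /trigpoly big_cons /= => /eqP; rewrite addrC addr_eq0 => /eqP.
  have H' x : trigpoly s' x = 0.
    have -> : trigpoly s' x = trigpoly s (x + t) - e2pi (a * t) * trigpoly s x.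
      rewrite /trigpoly /s' big_map mulr_sumr -sumrB; apply: eq_bigr => q _ /=.
      rewrite (mulrDr q.1) e2piD; ring.
    rewrite !Hs1 (mulrDr a) e2piD; ring.
  move=> q qs; have := IH s' (etrans (size_map _ _) sz) us' H' (q.1, q.2 * (e2pi (q.1 * t) - e2pi (a * t))).
  rewrite /= => /(_ (map_f _ qs)) /eqP; rewrite mulf_eq0 subr_eq0 => /orP[/eqP //|].
  by rewrite (negbTE (ht _ qs)).
have c0 : c = 0.
  have := H 0; rewrite /trigpoly big_cons /= big1_seq; last first.
    by move=> q /andP[_ qs]; rewrite Hs // mul0r.
  by rewrite mulr0 e2pi0 mulr1 addr0.
by move=> p; rewrite inE => /orP[/eqP -> //|]; exact: Hs.
Qed.

Lemma trig_zero (s : seq (R * R[i])) : uniq (map fst s) ->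
  (forall x, trigpoly s x = 0) -> forall p, p \in s -> p.2 = 0.
Proof. exact: trig_zero_n. Qed.

Lemma exists_max (F : seq (R * R)) (P : pred (R * R)) p0 :
  p0 \in F -> P p0 ->
  exists q, [/\ q \in F, P q & forall p, p \in F -> P p -> p.2 <= q.2].
Proof.
elim: F p0 => [//|x F IH] p0 p0F Pp0.
case: (pselect (exists2 y, y \in F & P y)) => [[y yF Py]|nF].
  have [q [qF Pq qmax]] := IH y yF Py.
  case Px: (P x); last first.
    exists q; split => //; first by rewrite inE qF orbT.
    by move=> p; rewrite inE => /orP[/eqP ->|pF]; [rewrite Px|exact: qmax].
  have [xq|qx] := leP x.2 q.2.
    exists q; split => //; first by rewrite inE qF orbT.
    by move=> p; rewrite inE => /orP[/eqP ->|pF] //; exact: qmax.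
  exists x; split => //; first by rewrite inE eqxx.
  move=> p; rewrite inE => /orP[/eqP ->|pF Pp] //.
  by apply: le_trans (qmax _ pF Pp) (ltW qx).
have p0x : p0 = x.
  move: p0F; rewrite inE => /orP[/eqP //|p0F]; by exfalso; apply: nF; exists p0.
subst p0; exists x; split => //; try by rewrite inE eqxx.
move=> p; rewrite inE => /orP[/eqP -> //|pF Pp].
by exfalso; apply: nF; exists p.
Qed.

Lemma core (f : R -> R[i]) (Lam : set (R * R)) (Bset : set R) :
  (forall p q, Lam p -> Lam q -> q.2 < p.2 -> Bset (p.2 - q.2)) ->
  hypE f Bset -> gabor_lin_indep f Lam.
Proof.
move=> HB hE F c uF FL [p0 p0F cp0] [N [mN N0 sN]].
have [q [qF cq qmax]] := @exists_max F (fun p => c p != 0) p0 p0F cp0.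
set be := q.2.
set G1 := [seq p <- F | p.2 == be].
set u := [seq (p.1, c p * e2pi (p.1 * be)) | p <- G1].
set B := undup [seq be - p.2 | p <- F & (c p != 0) && (p.2 != be)].
set K := \sum_(p <- F) cmod (c p).
have K0 : 0 <= K by apply: sumr_ge0 => p _; exact: cmod_ge0.
have unz : exists x, trigpoly u x != 0.
  case: (pselect (exists x, trigpoly u x != 0)) => // Hn; exfalso.
  have H0 x : trigpoly u x = 0.
    by apply/eqP; apply: contraT => h; exfalso; apply: Hn; exists x.
  have uu : uniq (map fst u).
    rewrite /u -map_comp map_inj_in_uniq ?filter_uniq //.
    move=> [a1 b1] [a2 b2]; rewrite !mem_filter /= => /andP[/eqP e1 _] /andP[/eqP e2 _] ->.
    by rewrite e1 e2.
  have qG : q \in G1 by rewrite mem_filter eqxx qF.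
  have := @trig_zero u uu H0 _ (map_f (fun p => (p.1, c p * e2pi (p.1 * be))) qG).
  by move/eqP; rewrite /= mulf_eq0 (negbTE cq) (negbTE (e2pi_neq0 _)).
have BB y : y \in B -> Bset y.
  rewrite /B mem_undup => /mapP[p]; rewrite mem_filter => /andP[/andP[cp pb] pF] ->.
  apply: HB; [exact: FL | exact: FL | ].
  by rewrite lt_neqAle pb qmax.
have Mp : 0 < K + 1 by lra.
have := hE u unz B (undup_uniq _) BB (K + 1) Mp.
apply/negP; rewrite -leNgt -N0.
have sub : Eset f u (K + 1) B `<=` [set y : R | N (y + be)].
  move=> y [ypos HM]; rewrite /=.
  apply: contrapT => Nn.
  have Py : \sum_(p <- F) c p * MT p.1 p.2 f (y + be) = 0.
    by apply: contrapT => nP; apply: Nn; apply: sN; exact: nP.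
  rewrite (bigID (fun p => p.2 == be)) /= in Py.
  have E1 : \sum_(p <- F | p.2 == be) c p * MT p.1 p.2 f (y + be) = trigpoly u y * f y.
    rewrite /trigpoly /u big_map big_filter mulr_suml; apply: eq_bigr => p /eqP pb.
    rewrite /MT /= pb addrK (mulrDr p.1) e2piD; ring.
  rewrite E1 in Py.
  set S2 := \sum_(p <- F | ~~ (p.2 == be)) _ in Py.
  set S := \sum_(bi <- B) cmod (f (y + bi)) in HM.
  have S0 : 0 <= S by apply: sumr_ge0 => z _; exact: cmod_ge0.
  have eq : trigpoly u y * f y = - S2.
    by apply/eqP; rewrite -addr_eq0; apply/eqP.
  have bound : cmod S2 <= K * S.
    apply: le_trans (cmod_sum _ _ _ _) _.
    apply: (@le_trans _ _ (\sum_(p <- F | ~~ (p.2 == be)) cmod (c p) * S)).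
      rewrite big_seq_cond [in X in _ <= X]big_seq_cond.
      apply: ler_sum => p /andP[pF pb].
      rewrite /MT !cmodM cmod_e2pi mul1r.
      case: (eqVneq (c p) 0) => [->|cp]; first by rewrite cmod0 !mul0r.
      apply: ler_wpM2l; first exact: cmod_ge0.
      rewrite (_ : y + be - p.2 = y + (be - p.2)); last by rewrite addrA.
      apply: (@le_sum_mem _ B (fun bi => cmod (f (y + bi)))); last by move=> z; exact: cmod_ge0.
      by rewrite /B mem_undup; apply: map_f; rewrite mem_filter cp pb.
    rewrite -mulr_suml; apply: ler_wpM2r => //.
    rewrite /K [X in _ <= X](bigID (fun p => p.2 == be)) /= lerDr.
    by apply: sumr_ge0 => p _; exact: cmod_ge0.
  move: HM; rewrite eq cmodN mulrDl mul1r => HM.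
  have h := lt_le_trans HM bound.
  have : (0 : R) < 0 by lra.
  by rewrite ltxx.
apply: le_trans (leb_shift N be).
change (mu_ext (wlength idfun) (Eset f u (K + 1) B) <=
  mu_ext (wlength idfun) ([set y : R | N (y + be)%R] : set (ocitv_type R)))%E.
exact: le_mu_ext.
Qed.
End S.


Theorem theorem3p1 (R : realType) (f : R -> R[i]) :
  leb_measurable f ->
  (hypE f [set x : R | 0 < x] -> gabor_lin_indep f [set: R * R]) /\
  (forall b : R, 0 < b ->
     hypE f [set y : R | exists2 k : nat, (0 < k)%N & y = b * k%:R] ->
     gabor_lin_indep f [set p : R * R | exists k : int, p.2 = b * k%:~R]).
Proof.
move=> _; split.
  apply: core => p q _ _ h /=; by rewrite subr_gt0.
move=> b b0; apply: core => p q [k1 e1] [k2 e2] h /=.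
rewrite e1 e2 in h *.
have k21 : k2 < k1 by rewrite -(ltr_int R) -(ltr_pM2l b0).
exists `|k1 - k2|%N.
  by rewrite absz_gt0 subr_eq0 gt_eqF.
rewrite natr_absz ger0_norm ?subr_ge0 ?(ltW k21) // intrB mulrBr.
reflexivity.
Qed.
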